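(* Let $S$ be a $0$-cancellative semigroup admitting least common multiples. For $i=1,2$ let $\Lambda_i\subseteq\tilde S$ be finite with $\Lambda_i\cap S\neq\emptyset$, and let $u_i,v_i\in\Lambda_i$, such that $$\theta_{u_1}f_{\Lambda_1}\theta_{v_1}^{-1}=\theta_{u_2}f_{\Lambda_2}\theta_{v_2}^{-1}\neq0.$$ Then there are $x_1,x_2\in\tilde S$ such that (i) $\theta_{u_i}f_{\Lambda_i}\theta_{v_i}^{-1}=\theta_{u_ix_i}f_{\Lambda_ix_i}\theta_{v_ix_i}^{-1}$ for $i=1,2$; (ii) $u_1x_1=u_2x_2$ and $F_{\Lambda_1x_1}=F_{\Lambda_2x_2}$; and moreover at least one of the following holds: (a) $v_1x_1=v_2x_2$; (b) $v_1x_1$ is an idempotent element of $S$, $\theta_{v_1x_1}\geq f_{\Lambda_1x_1}$, and $v_2=x_2=1$; (c) the same as (b) with the indices $1$ and $2$ interchanged.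
   Context: $S$ has zero $0$, $S'=S\setminus\{0\}$; $0$-cancellative means $st=sr\neq0\Rightarrow t=r$ and $ts=rs\neq0\Rightarrow t=r$. $\tilde S=S\cup\{1\}$, $1\notin S$ an adjoined identity; $s\mid t$ means $t\in s\tilde S$; $r$ is a least common multiple of $s,t$ if $sS\cap tS=rS$, $s\mid r$, $t\mid r$; $S$ admits least common multiples if every pair has one. For $s\in S$: $F_s=\{x\in S':sx\neq0\}$, $\theta_s:F_s\to sS\setminus\{0\}$, $x\mapsto sx$, a partial bijection of $S'$; $\theta_1=\mathrm{id}_{S'}$, $F_1=S'$. For finite $\Lambda\subseteq\tilde S$, $F_\Lambda=\bigcap_{w\in\Lambda}F_w$ and $f_\Lambda=\mathrm{id}_{F_\Lambda}$; $\Lambda x=\{\lambda x:\lambda\in\Lambda\}$. Products are compositions of partial bijections; $0$ denotes the empty map; $\geq$ is the natural order (for partial bijections, $g\geq h$ iff $h$ is a restriction of $g$). *)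

(* Defs.v *)
(* A semigroup with zero is given by a carrier T, a zero z and
   a multiplication mul; the adjoined identity of S~ = S ∪ {1} is encoded by
   option T, with None standing for 1 and Some s for s ∈ S. *)
From Stdlib Require Import List.
Import ListNotations.
Set Implicit Arguments.

Section SG.
Variables (T : Type) (z : T) (mul : T -> T -> T).

Definition tmul (a b : option T) : option T :=
  match a, b with
  | None, _ => b
  | _, None => a
  | Some s, Some t => Some (mul s t)
  end.

Definition act (w : option T) (x : T) : T :=
  match w with None => x | Some s => mul s x end.

Definition is_semigroup_with_zero : Prop :=
  (forall a b c, mul (mul a b) c = mul a (mul b c)) /\
  (forall a, mul z a = z) /\ (forall a, mul a z = z).

Definition zero_cancellative : Prop :=
  (forall s t r, mul s t = mul s r -> mul s t <> z -> t = r) /\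
  (forall s t r, mul t s = mul r s -> mul t s <> z -> t = r).

Definition sdivides (s t : T) : Prop := exists a : option T, Some t = tmul (Some s) a.

Definition is_lcm (s t r : T) : Prop :=
  (forall w, ((exists a, w = mul s a) /\ (exists b, w = mul t b)) <->
             (exists c, w = mul r c)) /\
  sdivides s r /\ sdivides t r.

Definition admits_lcm : Prop := forall s t, exists r, is_lcm s t r.

(* partial maps on S' represented by their graphs *)
Definition pmap := T -> T -> Prop.

Definition pcomp (g h : pmap) : pmap := fun x y => exists m, h x m /\ g m y.
Definition pinv (g : pmap) : pmap := fun x y => g y x.
Definition peq (g h : pmap) : Prop := forall x y, g x y <-> h x y.
Definition pnonzero (g : pmap) : Prop := exists x y, g x y.
Definition pge (g h : pmap) : Prop := forall x y, h x y -> g x y.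

Definition Fdom (w : option T) (x : T) : Prop := x <> z /\ act w x <> z.

Definition theta (w : option T) : pmap := fun x y => Fdom w x /\ y = act w x.

Definition FL (L : list (option T)) (x : T) : Prop :=
  x <> z /\ forall w, In w L -> Fdom w x.

Definition fL (L : list (option T)) : pmap := fun x y => FL L x /\ y = x.

Definition Lmul (L : list (option T)) (x : option T) : list (option T) :=
  map (fun l => tmul l x) L.

Definition tft (u : option T) (L : list (option T)) (v : option T) : pmap :=
  pcomp (theta u) (pcomp (fL L) (pinv (theta v))).

End SG.

(* Main.v *)
Require Import Defs.
From Stdlib Require Import List.

Section Aux.
Variables (T : Type) (z : T) (mul : T -> T -> T).
Hypothesis HS : is_semigroup_with_zero z mul.
Hypothesis Hc : zero_cancellative z mul.

Lemma act_tmul a b m : act mul (tmul mul a b) m = act mul a (act mul b m).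
Proof. destruct HS as [Ha _]. destruct a, b; simpl; auto. Qed.

Lemma act_z a : act mul a z = z.
Proof. destruct a; simpl; [apply (proj2 (proj2 HS))|auto]. Qed.

Lemma tmul_None a b : tmul mul a b = None -> a = None /\ b = None.
Proof. destruct a, b; simpl; try discriminate; auto. Qed.

Lemma tft_char u L v p q : In u L -> In v L ->
  (tft z mul u L v p q <-> exists m, FL z mul L m /\ p = act mul v m /\ q = act mul u m).
Proof.
  intros Hu Hv; unfold tft, pcomp, pinv, theta, fL; split.
  - intros [m1 [[m [[Hd Hp] [HF Hm]]] [Hd2 Hq]]]. exists m. subst. split; [exact HF| split; reflexivity].
  - intros [m [HF [Hp Hq]]]. exists m. split.
    + exists m. split. split. apply (proj2 HF). exact Hv. exact Hp. split; auto.
    + split. apply (proj2 HF); exact Hu. exact Hq.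
Qed.

Lemma FL_Lmul L x m s : In (Some s) L ->
  (FL z mul (Lmul mul L x) m <-> m <> z /\ FL z mul L (act mul x m)).
Proof.
  intros Hs. unfold FL, Fdom, Lmul. split.
  - intros [Hm H].
    assert (Hx : act mul x m <> z).
    { intro E. destruct (H (tmul mul (Some s) x)) as [_ H2].
      apply (in_map (fun l => tmul mul l x)); exact Hs.
      rewrite act_tmul, E, act_z in H2. apply H2; reflexivity. }
    split; [auto|split; [auto|]]. intros w Hw; split; auto.
    destruct (H (tmul mul w x)) as [_ H2].
    apply (in_map (fun l => tmul mul l x)); auto.
    rewrite act_tmul in H2; auto.
  - intros [Hm [Hx H]]. split; auto. intros w' Hw'.
    apply in_map_iff in Hw'. destruct Hw' as [w [Ew Hw]]. subst w'.
    split; auto. rewrite act_tmul. apply (proj2 (H w Hw)).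
Qed.

Lemma peq_x u L v x s : In (Some s) L -> In u L -> In v L ->
  (forall m, FL z mul L m -> exists c, m = act mul x c) ->
  peq (tft z mul u L v) (tft z mul (tmul mul u x) (Lmul mul L x) (tmul mul v x)).
Proof.
  intros Hs Hu Hv Hx p q.
  assert (Hu' : In (tmul mul u x) (Lmul mul L x)) by (apply (in_map (fun l => tmul mul l x)); auto).
  assert (Hv' : In (tmul mul v x) (Lmul mul L x)) by (apply (in_map (fun l => tmul mul l x)); auto).
  rewrite (tft_char u L v p q Hu Hv), (tft_char _ _ _ p q Hu' Hv').
  split.
  - intros [m [HF [Hp Hq]]]. destruct (Hx m HF) as [c Hc']. exists c.
    assert (Hcz : c <> z).
    { intro E; subst c; rewrite act_z in Hc'; subst m; apply (proj1 HF); reflexivity. }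
    split. apply (proj2 (FL_Lmul L x c s Hs)). split; auto. rewrite <- Hc'; auto.
    rewrite !act_tmul, <- Hc'. auto.
  - intros [c [HF [Hp Hq]]]. apply (FL_Lmul L x c s Hs) in HF.
    exists (act mul x c). rewrite act_tmul in Hp, Hq. tauto.
Qed.

Lemma cancel_l u m m' : act mul u m = act mul u m' -> act mul u m <> z -> m = m'.
Proof. destruct u; simpl; auto. intros E N; exact (proj1 Hc _ _ _ E N). Qed.

Lemma final U M1 V1 M2 V2 :
  In U M1 -> In V1 M1 -> In U M2 -> In V2 M2 ->
  peq (tft z mul U M1 V1) (tft z mul U M2 V2) -> pnonzero (tft z mul U M1 V1) ->
  (forall m, FL z mul M1 m <-> FL z mul M2 m) /\
  (V1 = V2 \/ ((exists e, V1 = Some e /\ mul e e = e) /\ pge (theta z mul V1) (fL z mul M1) /\ V2 = None)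
   \/ ((exists e, V2 = Some e /\ mul e e = e) /\ pge (theta z mul V2) (fL z mul M2) /\ V1 = None)).
Proof.
  intros HU1 HV1 HU2 HV2 Heq Hnz.
  assert (A1 : forall m, FL z mul M1 m -> FL z mul M2 m /\ act mul V1 m = act mul V2 m).
  { intros m Hm.
    assert (H : tft z mul U M2 V2 (act mul V1 m) (act mul U m)).
    { apply Heq. apply (tft_char _ _ _ _ _ HU1 HV1). exists m; auto. }
    apply (proj1 (tft_char _ _ _ _ _ HU2 HV2)) in H.
    destruct H as [m' [Hm' [Hp Hq]]].
    assert (m = m'). { apply (cancel_l U); auto. apply (proj2 (proj2 Hm U HU1)). }
    subst m'. auto. }
  assert (A2 : forall m, FL z mul M2 m -> FL z mul M1 m /\ act mul V1 m = act mul V2 m).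
  { intros m Hm.
    assert (H : tft z mul U M1 V1 (act mul V2 m) (act mul U m)).
    { apply Heq. apply (tft_char _ _ _ _ _ HU2 HV2). exists m; auto. }
    apply (proj1 (tft_char _ _ _ _ _ HU1 HV1)) in H.
    destruct H as [m' [Hm' [Hp Hq]]].
    assert (m = m'). { apply (cancel_l U); auto. apply (proj2 (proj2 Hm U HU2)). }
    subst m'. auto. }
  destruct Hnz as [p [q H]].
  apply (proj1 (tft_char _ _ _ _ _ HU1 HV1)) in H.
  destruct H as [m0 [H0 _]].
  split. { intro m; split; intro; [apply A1|apply A2]; auto. }
  destruct HS as [Hassoc _].
  destruct V1 as [a|], V2 as [b|].
  - left. f_equal. destruct (A1 m0 H0) as [_ E]. simpl in E.
    apply (proj2 Hc m0 a b E). exact (proj2 (proj2 H0 (Some a) HV1)).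
  - right; left. destruct (A1 m0 H0) as [_ E]. simpl in E.
    split; [|split; [|reflexivity]].
    + exists a; split; auto.
      assert (E2 : mul (mul a a) m0 = mul a m0) by (rewrite Hassoc, E; exact E).
      apply (proj2 Hc m0 _ _ E2). rewrite E2, E; apply (proj1 H0).
    + intros p' q' [Hp Eq]. subst q'. destruct (A1 p' Hp) as [_ E']. simpl in E'.
      unfold theta, Fdom. simpl. split. split. apply (proj1 Hp). rewrite E'; apply (proj1 Hp).
      symmetry; auto.
  - right; right. destruct (A1 m0 H0) as [H0' _].
    destruct (A2 m0 H0') as [_ E]. simpl in E.
    split; [|split; [|reflexivity]].
    + exists b; split; auto.
      assert (E2 : mul (mul b b) m0 = mul b m0) by (rewrite Hassoc, <- E; symmetry; exact E).
      apply (proj2 Hc m0 _ _ E2). rewrite E2, <- E; apply (proj1 H0).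
    + intros p' q' [Hp Eq]. subst q'. destruct (A2 p' Hp) as [_ E']. simpl in E'.
      unfold theta, Fdom. simpl. split. split. apply (proj1 Hp). rewrite <- E'; apply (proj1 Hp).
      auto.
  - left; reflexivity.
Qed.

Lemma choose (Hlcm : admits_lcm mul) L1 L2 u1 v1 u2 v2 :
  In u1 L1 -> In v1 L1 -> In u2 L2 -> In v2 L2 ->
  peq (tft z mul u1 L1 v1) (tft z mul u2 L2 v2) ->
  exists x1 x2, tmul mul u1 x1 = tmul mul u2 x2 /\
    (forall m, FL z mul L1 m -> exists c, m = act mul x1 c) /\
    (forall m, FL z mul L2 m -> exists c, m = act mul x2 c).
Proof.
  intros Hu1 Hv1 Hu2 Hv2 Heq.
  assert (R1 : forall m, FL z mul L1 m -> exists m', FL z mul L2 m' /\ act mul u1 m = act mul u2 m').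
  { intros m Hm.
    assert (H : tft z mul u2 L2 v2 (act mul v1 m) (act mul u1 m)).
    { apply Heq. apply (tft_char _ _ _ _ _ Hu1 Hv1). exists m; auto. }
    apply (proj1 (tft_char _ _ _ _ _ Hu2 Hv2)) in H.
    destruct H as [m' [Hm' [Hp Hq]]]. eauto. }
  assert (R2 : forall m, FL z mul L2 m -> exists m', FL z mul L1 m' /\ act mul u2 m = act mul u1 m').
  { intros m Hm.
    assert (H : tft z mul u1 L1 v1 (act mul v2 m) (act mul u2 m)).
    { apply Heq. apply (tft_char _ _ _ _ _ Hu2 Hv2). exists m; auto. }
    apply (proj1 (tft_char _ _ _ _ _ Hu1 Hv1)) in H.
    destruct H as [m' [Hm' [Hp Hq]]]. eauto. }
  destruct u1 as [t1|], u2 as [t2|].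
  - destruct (Hlcm t1 t2) as [r [Hlc [[a Ha] [b Hb]]]].
    exists a, b. split. { rewrite <- Ha, <- Hb. reflexivity. }
    split.
    + intros m Hm. destruct (R1 m Hm) as [m' [_ E]]. simpl in E.
      destruct (proj1 (Hlc (mul t1 m)) (conj (ex_intro _ m eq_refl) (ex_intro _ m' E))) as [c Ec].
      exists c.
      assert (E2 : act mul (Some r) c = act mul (Some t1) (act mul a c)) by (rewrite Ha; apply act_tmul).
      simpl in E2. rewrite E2 in Ec.
      apply (proj1 Hc _ _ _ Ec). exact (proj2 (proj2 Hm _ Hu1)).
    + intros m Hm. destruct (R2 m Hm) as [m' [_ E]]. simpl in E.
      destruct (proj1 (Hlc (mul t2 m)) (conj (ex_intro _ m' E) (ex_intro _ m eq_refl))) as [c Ec].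
      exists c.
      assert (E2 : act mul (Some r) c = act mul (Some t2) (act mul b c)) by (rewrite Hb; apply act_tmul).
      simpl in E2. rewrite E2 in Ec.
      apply (proj1 Hc _ _ _ Ec). exact (proj2 (proj2 Hm _ Hu2)).
  - exists None, (Some t1). split; [reflexivity|]. split.
    + intros m _. exists m. reflexivity.
    + intros m Hm. destruct (R2 m Hm) as [m' [_ E]]. simpl in E. exists m'. exact E.
  - exists (Some t2), None. split; [reflexivity|]. split.
    + intros m Hm. destruct (R1 m Hm) as [m' [_ E]]. simpl in E. exists m'. exact E.
    + intros m _. exists m. reflexivity.
  - exists None, None. split; [reflexivity|]. split; intros m _; exists m; reflexivity.
Qed.

End Aux.

Theorem theorem7p21 (T : Type) (z : T) (mul : T -> T -> T)
  (HS : is_semigroup_with_zero z mul)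
  (Hcanc : zero_cancellative z mul)
  (Hlcm : admits_lcm mul)
  (L1 L2 : list (option T)) (u1 v1 u2 v2 : option T)
  (HL1 : exists s, In (Some s) L1) (HL2 : exists s, In (Some s) L2)
  (Hu1 : In u1 L1) (Hv1 : In v1 L1) (Hu2 : In u2 L2) (Hv2 : In v2 L2)
  (Heq : peq (tft z mul u1 L1 v1) (tft z mul u2 L2 v2))
  (Hnz : pnonzero (tft z mul u1 L1 v1)) :
  exists x1 x2 : option T,
    peq (tft z mul u1 L1 v1)
        (tft z mul (tmul mul u1 x1) (Lmul mul L1 x1) (tmul mul v1 x1)) /\
    peq (tft z mul u2 L2 v2)
        (tft z mul (tmul mul u2 x2) (Lmul mul L2 x2) (tmul mul v2 x2)) /\
    tmul mul u1 x1 = tmul mul u2 x2 /\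
    (forall x, FL z mul (Lmul mul L1 x1) x <-> FL z mul (Lmul mul L2 x2) x) /\
    ( tmul mul v1 x1 = tmul mul v2 x2
    \/ ((exists e, tmul mul v1 x1 = Some e /\ mul e e = e) /\
        pge (theta z mul (tmul mul v1 x1)) (fL z mul (Lmul mul L1 x1)) /\
        v2 = None /\ x2 = None)
    \/ ((exists e, tmul mul v2 x2 = Some e /\ mul e e = e) /\
        pge (theta z mul (tmul mul v2 x2)) (fL z mul (Lmul mul L2 x2)) /\
        v1 = None /\ x1 = None) ).
Proof.
  destruct HL1 as [s1 Hs1], HL2 as [s2 Hs2].
  destruct (@choose T z mul HS Hcanc Hlcm _ _ _ _ _ _ Hu1 Hv1 Hu2 Hv2 Heq) as [x1 [x2 [E [C1 C2]]]].
  pose proof (@peq_x T z mul HS u1 L1 v1 x1 s1 Hs1 Hu1 Hv1 C1) as P1.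
  pose proof (@peq_x T z mul HS u2 L2 v2 x2 s2 Hs2 Hu2 Hv2 C2) as P2.
  assert (HU1 : In (tmul mul u1 x1) (Lmul mul L1 x1)) by (apply (in_map (fun l => tmul mul l x1)); auto).
  assert (HV1 : In (tmul mul v1 x1) (Lmul mul L1 x1)) by (apply (in_map (fun l => tmul mul l x1)); auto).
  assert (HU2 : In (tmul mul u2 x2) (Lmul mul L2 x2)) by (apply (in_map (fun l => tmul mul l x2)); auto).
  assert (HV2 : In (tmul mul v2 x2) (Lmul mul L2 x2)) by (apply (in_map (fun l => tmul mul l x2)); auto).
  rewrite <- E in HU2.
  assert (P2' : peq (tft z mul u2 L2 v2) (tft z mul (tmul mul u1 x1) (Lmul mul L2 x2) (tmul mul v2 x2)))
    by (rewrite E; exact P2).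
  assert (P : peq (tft z mul (tmul mul u1 x1) (Lmul mul L1 x1) (tmul mul v1 x1))
                  (tft z mul (tmul mul u1 x1) (Lmul mul L2 x2) (tmul mul v2 x2))).
  { intros p q. rewrite <- (P1 p q), <- (P2' p q). apply Heq. }
  assert (Hnz' : pnonzero (tft z mul (tmul mul u1 x1) (Lmul mul L1 x1) (tmul mul v1 x1))).
  { destruct Hnz as [p [q H]]. exists p, q. apply P1, H. }
  destruct (@final T z mul HS Hcanc _ _ _ _ _ HU1 HV1 HU2 HV2 P Hnz') as [F D].
  exists x1, x2. split; [exact P1|]. split; [exact P2|]. split; [exact E|].
  split; [exact F|].
  destruct D as [D|[[D1 [D2 D3]]|[D1 [D2 D3]]]].
  - left; exact D.
  - right; left. apply tmul_None in D3. tauto.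
  - right; right. apply tmul_None in D3. tauto.
Qed.
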